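(* Let $G$ be a finite group and $\mathcal{H}$ a special set of subgroups of $G$ with $d_G(\mathcal{H})>1$. Let $p$ be a prime divisor of $d_G(\mathcal{H})$ and $P$ a $p$-Sylow subgroup of $G$. Then there is a subset $\mathcal{H}_P^{*}$ of $\mathcal{H}_P^{\mathrm{set}}$ which is special (as a set of subgroups of $P$) and satisfies $\#\mathcal{H}_P^{*}\geq\#\mathcal{H}$.
   Context: For a subgroup $H$ of a finite group $G$, $N^G(H):=\bigcap_{g\in G}gHg^{-1}$ is its normal core. A set $\mathcal{H}$ of subgroups of $G$ is special if $G\notin\mathcal{H}$, $\#\mathcal{H}\geq2$, and for all $H,H'\in\mathcal{H}$ with $H\neq H'$ one has $N^G(H)H'=G$ or $N^G(H')H=G$. $d_G(\mathcal{H}):=\gcd((G:H)\mid H\in\mathcal{H})$. For a subgroup $P\leq G$, $\mathcal{H}_P$ is the multiset of subgroups of $P$ consisting of $P\cap gHg^{-1}$ for every $H\in\mathcal{H}$ and every $g$ in a fixed complete set of representatives of $P\backslash G/H$; $\mathcal{H}_P^{\mathrm{set}}$ is its underlying set. *)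

(* Defs.v *)
From mathcomp Require Import all_boot all_fingroup all_solvable.
Set Implicit Arguments. Unset Strict Implicit. Unset Printing Implicit Defensive.
Local Open Scope group_scope.

Definition ncore (gT : finGroupType) (G H : {set gT}) : {set gT} :=
  \bigcap_(g in G) (H :^ g).

Definition special_set (gT : finGroupType) (G : {group gT}) (Hs : {set {group gT}}) : Prop :=
  [/\ forall H : {group gT}, H \in Hs -> H \subset G,
      G \notin Hs,
      2 <= #|Hs|
    & forall H H' : {group gT}, H \in Hs -> H' \in Hs -> H != H' ->
        (ncore G H * H' = G) \/ (ncore G H' * H = G)].

Definition dG (gT : finGroupType) (G : {group gT}) (Hs : {set {group gT}}) : nat :=
  \big[gcdn/0]_(H in Hs) #|G : H|.

Definition double_coset_reps (gT : finGroupType) (G P H : {set gT}) (R : {set gT}) : Prop :=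
  R \subset G /\
  forall x, x \in G -> exists r, [/\ r \in R, x \in (P :* r) * H &
     forall r', r' \in R -> x \in (P :* r') * H -> r' = r].

(* Underlying set of the multiset H_P: P ∩ g H g^-1 for H in Hs, g in reps H.
   Note g H g^-1 = H :^ g^-1 in mathcomp's convention (x ^ g = g^-1 x g). *)
Definition HPset (gT : finGroupType) (P : {group gT}) (Hs : {set {group gT}})
    (reps : {group gT} -> {set gT}) : {set {group gT}} :=
  [set (P :&: H :^ g^-1)%G | H in Hs, g in reps H].

(* Main.v *)
Require Import Defs.
From mathcomp Require Import all_boot all_fingroup all_solvable.
Set Implicit Arguments. Unset Strict Implicit. Unset Printing Implicit Defensive.
Local Open Scope group_scope.

Lemma key (gT : finGroupType) (p : nat) (G N K P : {group gT}) :
  N <| G -> K \subset G -> N * K = G -> p.-Sylow(G) P -> p.-Sylow(K) (P :&: K) ->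
  (P :&: N) * (P :&: K) = P.
Proof.
move=> nNG sKG eNK sylP sylPK.
have sPN := Sylow_setI_normal nNG sylP.
have nNKK : (N :&: K) <| K by rewrite setIC; exact: normalGI sKG nNG.
have s2 := Sylow_setI_normal nNKK sylPK.
have eI : (P :&: N) :&: (P :&: K) = (N :&: K) :&: (P :&: K).
  by apply/setP=> x; rewrite !inE; case: (x \in P); case: (x \in N); case: (x \in K).
have c1 := mul_cardG [group of P :&: N] [group of P :&: K].
have c2 := mul_cardG N K.
have cPN : #|P :&: N| = (#|N|`_p)%N by rewrite setIC (card_Hall sPN).
rewrite /= eI (card_Hall s2) (card_Hall sylPK) cPN in c1.
rewrite eNK in c2.
have : ((#|N| * #|K|)`_p = (#|G| * #|N :&: K|)`_p)%N by rewrite c2.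
rewrite !partnM // c1 -(card_Hall sylP) => c3.
apply/eqP; rewrite eqEcard mul_subG ?subsetIl //=.
move: c3 => /eqP; rewrite eqn_pmul2r ?part_gt0 // => /eqP <-.
by [].
Qed.

Lemma good_exists (gT : finGroupType) (p : nat) (G P H : {group gT}) (R : {set gT}) :
  p.-Sylow(G) P -> H \subset G -> double_coset_reps G P H R ->
  exists2 r, r \in R & p.-Sylow(H :^ r^-1) (P :&: H :^ r^-1).
Proof.
move=> sylP sHG [_ Rdef].
have [S sylS] := Sylow_exists p H.
have [x xG sSPx] := Sylow_subJ sylP (subset_trans (pHall_sub sylS) sHG) (pHall_pgroup sylS).
have gx : p.-Sylow(H :^ x^-1) (P :&: H :^ x^-1).
  have sylSx : p.-Sylow(H :^ x^-1) (S :^ x^-1) by rewrite pHallJ2.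
  have pK : p.-group (P :&: H :^ x^-1) := pgroupS (subsetIl _ _) (pHall_pgroup sylP).
  have sSK : S :^ x^-1 \subset P :&: H :^ x^-1.
    by rewrite subsetI sub_conjgV sSPx conjSg (pHall_sub sylS).
  by rewrite (sub_pHall sylSx pK sSK (subsetIr _ _)).
have [r [rR xin _]] := Rdef x xG.
exists r => //.
case/mulsgP: xin => a h /rcosetP [y yP ->] hH exy.
rewrite exy !invMg !conjsgM (conjGid (groupVr hH)) in gx.
have eP : P :^ y^-1 = P := conjGid (groupVr yP).
by rewrite -{1}eP -conjIg pHallJ2 in gx.
Qed.

Lemma notP (gT : finGroupType) (p : nat) (G P H : {group gT}) (g : gT) :
  prime p -> p.-Sylow(G) P -> H \subset G -> p %| #|G : H| -> ~~ (P \subset H :^ g).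
Proof.
move=> pp sylP sHG pdiv; apply/negP => sPH.
have := cardSg sPH; rewrite cardJg (card_Hall sylP) p_part pfactor_dvdn // => le.
have eL := Lagrange sHG.
have : 0 < logn p #|G : H| by rewrite logn_gt0 mem_primes pp pdiv indexg_gt0.
move: le; rewrite -eL lognM ?cardG_gt0 ?indexg_gt0 //.
by rewrite -{2}[logn p #|H|]addn0 leq_add2l leqn0 => /eqP ->.
Qed.

Lemma core_bound (gT : finGroupType) (G P Q : {group gT}) (N : {group gT}) :
  P \subset G -> G \subset 'N(N) -> P :&: N \subset Q -> P :&: N \subset ncore P Q.
Proof.
move=> sPG nNG sPNQ; apply/bigcapsP => g gP.
rewrite -sub_conjgV conjIg (conjGid (groupVr gP)).
by rewrite ((normsP nNG) g^-1 (subsetP sPG _ (groupVr gP))).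
Qed.

Lemma ncore_sub (gT : finGroupType) (P Q : {group gT}) : ncore P Q \subset Q.
Proof. by rewrite -{2}[gval Q]conjsg1; apply: (bigcap_inf 1); rewrite group1. Qed.

Unset Implicit Arguments.
Theorem proposition5p3 (gT : finGroupType) (G : {group gT}) (Hs : {set {group gT}})
    (p : nat) (P : {group gT}) (reps : {group gT} -> {set gT}) :
  special_set G Hs ->
  1 < dG G Hs ->
  prime p -> p %| dG G Hs ->
  P \in 'Syl_p(G) ->
  (forall H : {group gT}, H \in Hs -> double_coset_reps G P H (reps H)) ->
  exists Hstar : {set {group gT}},
    [/\ Hstar \subset HPset P Hs reps, special_set P Hstar & #|Hs| <= #|Hstar|].
Proof.
move=> [sHsG GnotHs card2 spec] d1 pp pd sylP' Rd.
have sylP : p.-Sylow(G) P by move: sylP'; rewrite inE.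
have sPG := pHall_sub sylP.
have pdiv H : H \in Hs -> p %| #|G : H|.
  by move=> HH; apply: dvdn_trans pd _; rewrite /dG (bigD1 H) //=; exact: dvdn_gcdl.
pose good (H : {group gT}) r := p.-Sylow(H :^ r^-1) (P :&: H :^ r^-1).
pose rr (H : {group gT}) := odflt 1 [pick r in reps H | good H r].
have rrP H : H \in Hs -> rr H \in reps H /\ good H (rr H).
  move=> HH; rewrite /rr; case: pickP => [r /andP[] //|none].
  have [r rR gr] := good_exists sylP (sHsG H HH) (Rd H HH).
  by move: (none r); rewrite rR /good gr.
have rrG H : H \in Hs -> rr H \in G.
  by move=> HH; have [sRG _] := Rd H HH; exact: subsetP sRG _ (rrP H HH).1.
pose f (H : {group gT}) := (P :&: H :^ (rr H)^-1)%G.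
have nfH H : H \in Hs -> ~~ (P \subset f H).
  move=> HH; apply: contra (notP (rr H)^-1 pp sylP (sHsG H HH) (pdiv H HH)).
  by move=> sPf; apply: subset_trans sPf (subsetIr _ _).
have prodf H H' : H \in Hs -> H' \in Hs -> ncore G H * H' = G ->
    ncore P (f H) * f H' = P.
  move=> HH HH' eNH.
  have nNG : gcore H G <| G := gcore_normal (sHsG H HH).
  have r'G := rrG H' HH'.
  have sKG : H' :^ (rr H')^-1 \subset G by rewrite sub_conjg invgK (conjGid r'G); exact: sHsG.
  have eNK : gcore_group H G * (H' :^ (rr H')^-1)%G = G.
    have eNH' : gcore H G * H' = G := eNH.
    rewrite /= -{2}(conjGid (groupVr r'G)) -{2}eNH' conjsMg.
    by rewrite ((normsP (gcore_norm H G)) _ (groupVr r'G)).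
  have ek := key nNG sKG eNK sylP (rrP H' HH').2.
  apply/eqP; rewrite eqEsubset mul_subG ?subsetIl //=; last first.
    exact: subset_trans (ncore_sub _ _) (subsetIl _ _).
  rewrite -{1}ek mulSg // (core_bound sPG (gcore_norm H G)) //.
  apply: setIS => /=.
  by apply: (bigcap_inf (rr H)^-1); rewrite groupVr //; exact: rrG.
have injf : {in Hs &, injective f}.
  move=> H H' HH HH' ef; apply/eqP; apply/negPn/negP => neH.
  case: (spec H H' HH HH' neH) => e.
  - have e2 := prodf H H' HH HH' e; rewrite -ef in e2.
    move: (nfH H HH); rewrite -{1}e2 mul_subG ?subxx ?ncore_sub //.
  - have e2 := prodf H' H HH' HH e; rewrite ef in e2.
    move: (nfH H' HH'); rewrite -{1}e2 mul_subG ?subxx ?ncore_sub //.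
exists (f @: Hs); split.
- apply/subsetP => Q /imsetP [H HH ->]; rewrite /HPset.
  by apply: imset2_f => //; exact: (rrP H HH).1.
- split.
  + by move=> Q /imsetP [H HH ->]; exact: subsetIl.
  + apply/imsetP => [[H HH eP]].
    by move: (nfH H HH); rewrite -eP subxx.
  + by rewrite card_in_imset.
  + move=> Q Q' /imsetP[H HH ->] /imsetP[H' HH' ->] neq.
    have neH : H != H' by apply: contraNneq neq => ->.
    case: (spec H H' HH HH' neH) => e.
    * by left; exact: prodf.
    * by right; exact: prodf.
- by rewrite card_in_imset.
Qed.
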